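(* In the stochastic epidemic model described in the context, let $u(k)=K\,I(k)$ for all $k\ge0$ with a constant gain $0\le K\le (1-d_{\max})/v_{\max}$. Then: (i) $0\le I(k)\le (1+\delta_{\max}-Kv_{\min})^kI_0$ for all $k\ge1$ with probability one; (ii) if $K<(1-d_{\max})/v_{\max}$, then $I(k)>0$ for all $k\ge1$ with probability one.
   Context: Time is indexed by days $k=0,1,2,\dots$. Let $(\delta(k))_{k\ge0}$, $(d_I(k))_{k\ge0}$, $(v(k))_{k\ge0}$ be three mutually independent sequences of random variables, each sequence i.i.d. in $k$, with $0\le \delta(k)\le \delta_{\max}$, $0\le d_I(k)\le d_{\max}$ where $d_{\max}<1$, and $0<v_{\min}\le v(k)\le v_{\max}\le 1$. Given a control sequence $u(k)$, the cases evolve by $S(k+1)=S(k)-\delta(k)I(k)$, $I(k+1)=(1+\delta(k))I(k)-v(k)u(k)-d_I(k)I(k)$, $R(k+1)=R(k)+v(k)u(k)$, $D(k+1)=D(k)+d_I(k)I(k)$, with $S(0)=S_0$, $I(0)=I_0>0$, $R(0)=D(0)=0$, $I_0\delta_{\max}<S_0$. *)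

(* Defs.v *)
From HB Require Import structures.
From mathcomp Require Import all_boot all_order all_algebra.
From mathcomp Require Import all_classical all_reals all_analysis.
Set Implicit Arguments. Unset Strict Implicit. Unset Printing Implicit Defensive.
Import Order.TTheory GRing.Theory Num.Theory.
Local Open Scope classical_set_scope.
Local Open Scope ring_scope.

Definition mutually_independent {d} {T : measurableType d} {R : realType}
  (P : probability T R) (I : eqType) (X : I -> T -> R) : Prop :=
  forall (s : seq I) (B : I -> set R),
    uniq s -> (forall i, measurable (B i)) ->
    P (\big[setI/setT]_(i <- s) (X i @^-1` B i)) =
    (\prod_(i <- s) P (X i @^-1` B i))%E.

Definition identically_distributed {d} {T : measurableType d} {R : realType}
  (P : probability T R) (X : nat -> T -> R) : Prop :=
  forall (k : nat) (B : set R), measurable B ->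
    P (X k @^-1` B) = P (X 0%N @^-1` B).

Definition three_indep_iid {d} {T : measurableType d} {R : realType}
  (P : probability T R) (delta dI v : nat -> T -> R) : Prop :=
  (forall k, measurable_fun setT (delta k)) /\
  (forall k, measurable_fun setT (dI k)) /\
  (forall k, measurable_fun setT (v k)) /\
  identically_distributed P delta /\
  identically_distributed P dI /\
  identically_distributed P v /\
  mutually_independent P
    (fun jk : 'I_3 * nat =>
       if nat_of_ord jk.1 == 0%N then delta jk.2
       else if nat_of_ord jk.1 == 1%N then dI jk.2 else v jk.2).

Definition epidemic_dynamics {R : realType} (delta dI v u S I Rc D : nat -> R)
  (S0 I0 : R) : Prop :=
  S 0%N = S0 /\ I 0%N = I0 /\ Rc 0%N = 0 /\ D 0%N = 0 /\
  forall k : nat,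
    S k.+1 = S k - delta k * I k /\
    I k.+1 = (1 + delta k) * I k - v k * u k - dI k * I k /\
    Rc k.+1 = Rc k + v k * u k /\
    D k.+1 = D k + dI k * I k.

(* Main.v *)
Require Import Defs.
From HB Require Import structures.
From mathcomp Require Import all_boot all_order all_algebra.
From mathcomp Require Import all_classical all_reals all_analysis.
From mathcomp Require Import lra.
Import Order.TTheory GRing.Theory Num.Theory.
Local Open Scope classical_set_scope.
Local Open Scope ring_scope.

Theorem lemma6 (R : realType) (d : measure_display) (T : measurableType d)
  (P : probability T R)
  (delta dI v : nat -> T -> R)
  (delta_max d_max v_min v_max S0 I0 K : R)
  (S I Rc D u : nat -> T -> R) :
  three_indep_iid P delta dI v ->
  (forall k w, 0 <= delta k w <= delta_max) ->
  (forall k w, 0 <= dI k w <= d_max) -> d_max < 1 ->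
  (forall k w, v_min <= v k w <= v_max) -> 0 < v_min -> v_max <= 1 ->
  0 < I0 -> I0 * delta_max < S0 ->
  (forall w, epidemic_dynamics (fun k => delta k w) (fun k => dI k w)
       (fun k => v k w) (fun k => u k w) (fun k => S k w) (fun k => I k w)
       (fun k => Rc k w) (fun k => D k w) S0 I0) ->
  (forall k w, u k w = K * I k w) ->
  0 <= K -> K <= (1 - d_max) / v_max ->
  {ae P, forall w, forall k : nat, (1 <= k)%N ->
      0 <= I k w <= (1 + delta_max - K * v_min) ^+ k * I0}
  /\
  (K < (1 - d_max) / v_max ->
   {ae P, forall w, forall k : nat, (1 <= k)%N -> 0 < I k w}).
Proof.
move=> _ hdel hdI hdm hv hvmin hvmax hI0 _ hdyn hu hK0 hK.
have vmax0 : 0 < v_max.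
  by have /andP[a b] := hv 0%N (point : T); lra.
have hKv : K * v_max <= 1 - d_max.
  by rewrite -ler_pdivlMr.
have step : forall k w, I k.+1 w =
    (1 + delta k w - K * v k w - dI k w) * I k w.
  move=> k w; have [_ [_ [_ [_ H]]]] := hdyn w.
  have [_ [-> _]] := H k; rewrite hu /=; lra.
have I0w : forall w, I 0%N w = I0 by move=> w; have [_ [-> _]] := hdyn w.
have fac : forall k w, delta k w <= 1 + delta k w - K * v k w - dI k w
      <= 1 + delta_max - K * v_min.
  move=> k w; have /andP[a b] := hdel k w; have /andP[c e] := hdI k w;
  have /andP[f g] := hv k w.
  have h1 : K * v k w <= K * v_max by apply: ler_wpM2l.
  have h2 : K * v_min <= K * v k w by apply: ler_wpM2l.
  apply/andP; split; lra.
split.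
  apply: aeW => w k _.
  elim: k => [|k IH]; first by rewrite I0w expr0 mul1r; apply/andP; lra.
  have /andP[a b] := IH; have /andP[c e] := fac k w.
  have /andP[a0 _] := hdel k w.
  rewrite step exprS -mulrA; apply/andP; split.
    by apply: mulr_ge0 => //; lra.
  apply: (le_trans (y := (1 + delta_max - K * v_min) * I k w)).
    by apply: ler_wpM2r.
  by apply: ler_wpM2l => //; lra.
move=> hK'.
have hKv' : K * v_max < 1 - d_max by rewrite -ltr_pdivlMr.
apply: aeW => w k _.
elim: k => [|k IH]; first by rewrite I0w.
rewrite step; apply: mulr_gt0 => //.
have /andP[a b] := hdel k w; have /andP[c e] := hdI k w;
have /andP[f g] := hv k w.
have h1 : K * v k w <= K * v_max by apply: ler_wpM2l.
lra.
Qed.
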